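(* Let $D$ be a cone, let $\varphi\colon D\to\overline{\mathbb{R}}_+$ be a sublinear functional, and let $\psi_1,\dots,\psi_n\colon D\to\overline{\mathbb{R}}_+$ ($n\ge1$) be linear functionals such that $\min(\psi_1(x),\dots,\psi_n(x))\le\varphi(x)$ for all $x\in D$. Then there are nonnegative real numbers $a_1,\dots,a_n$ with $\sum_{i=1}^n a_i=1$ such that for all $x\in D$ \[\min(\psi_1(x),\dots,\psi_n(x))\;\le\;\sum_{i=1}^n a_i\psi_i(x)\;\le\;\varphi(x).\]
   Context: $\overline{\mathbb{R}}_+=[0,+\infty)\cup\{+\infty\}$ with the usual order and arithmetic extended by $r+\infty=+\infty$, $r\cdot(+\infty)=+\infty$ for $r>0$, $0\cdot(+\infty)=0$. A cone is a commutative monoid $(C,+,0)$ with a scalar multiplication $[0,\infty)\times C\to C$ satisfying $r(x+y)=rx+ry$, $(r+s)x=rx+sx$, $(rs)x=r(sx)$, $1x=x$, $0x=0$ (no cancellation or additive inverses required). A functional is a map $\varphi\colon C\to\overline{\mathbb{R}}_+$. It is homogeneous if $\varphi(ra)=r\varphi(a)$ for all $a\in C$, $r\in[0,\infty)$; additive if $\varphi(a+b)=\varphi(a)+\varphi(b)$; subadditive if $\varphi(a+b)\le\varphi(a)+\varphi(b)$; linear = homogeneous and additive; sublinear = homogeneous and subadditive. *)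

(* Defs.v *)
From Stdlib Require Import Reals.
Open Scope R_scope.

(* Extended reals [-oo excluded]: finite values or +oo.  Functionals are
   required to take values in [0,+oo] via [nonneg_functional]. *)
Inductive ereal : Type := Fin (r : R) | Inf.

Definition ele (x y : ereal) : Prop :=
  match x, y with
  | _, Inf => True
  | Inf, Fin _ => False
  | Fin a, Fin b => a <= b
  end.

Definition eadd (x y : ereal) : ereal :=
  match x, y with
  | Fin a, Fin b => Fin (a + b)
  | _, _ => Inf
  end.

(* scalar r >= 0 times extended value, with 0 * +oo = 0 *)
Definition emul (r : R) (x : ereal) : ereal :=
  match x with
  | Fin a => Fin (r * a)
  | Inf => if Rlt_dec 0 r then Inf else Fin 0
  end.

Definition emin (x y : ereal) : ereal :=
  match x, y with
  | Inf, _ => y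
  | _, Inf => x
  | Fin a, Fin b => Fin (Rmin a b)
  end.

(* min of f 0, ..., f (n-1)  (Inf for n = 0, the neutral element) *)
Fixpoint emin_n (f : nat -> ereal) (n : nat) : ereal :=
  match n with
  | O => Inf
  | S k => emin (emin_n f k) (f k)
  end.

Fixpoint esum_n (f : nat -> ereal) (n : nat) : ereal :=
  match n with
  | O => Fin 0
  | S k => eadd (esum_n f k) (f k)
  end.

Fixpoint rsum_n (f : nat -> R) (n : nat) : R :=
  match n with
  | O => 0
  | S k => rsum_n f k + f k
  end.

Record cone : Type := Cone {
  carrier :> Type;
  cadd : carrier -> carrier -> carrier;
  czero : carrier;
  csmul : R -> carrier -> carrier;
  cadd_assoc : forall x y z, cadd x (cadd y z) = cadd (cadd x y) z;
  cadd_comm : forall x y, cadd x y = cadd y x;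
  cadd_0 : forall x, cadd czero x = x;
  csmul_addr : forall r x y, 0 <= r -> csmul r (cadd x y) = cadd (csmul r x) (csmul r y);
  csmul_addl : forall r s x, 0 <= r -> 0 <= s -> csmul (r + s) x = cadd (csmul r x) (csmul s x);
  csmul_mul : forall r s x, 0 <= r -> 0 <= s -> csmul (r * s) x = csmul r (csmul s x);
  csmul_1 : forall x, csmul 1 x = x;
  csmul_0 : forall x, csmul 0 x = czero
}.


Definition nonneg_functional {D : cone} (phi : D -> ereal) : Prop :=
  forall x, ele (Fin 0) (phi x).

Definition homogeneous {D : cone} (phi : D -> ereal) : Prop :=
  forall a r, 0 <= r -> phi (csmul D r a) = emul r (phi a).

Definition additive {D : cone} (phi : D -> ereal) : Prop :=
  forall a b, phi (cadd D a b) = eadd (phi a) (phi b).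

Definition subadditive {D : cone} (phi : D -> ereal) : Prop :=
  forall a b, ele (phi (cadd D a b)) (eadd (phi a) (phi b)).

Definition linear_functional {D : cone} (phi : D -> ereal) : Prop :=
  nonneg_functional phi /\ homogeneous phi /\ additive phi.

Definition sublinear_functional {D : cone} (phi : D -> ereal) : Prop :=
  nonneg_functional phi /\ homogeneous phi /\ subadditive phi.

(* Main.v *)
Require Import Defs.
From Stdlib Require Import Reals Lra Lia Classical.
Open Scope R_scope.

Ltac dec := repeat match goal with
 | |- context [Rlt_dec ?a ?b] => destruct (Rlt_dec a b)
 | H : context [Rlt_dec ?a ?b] |- _ => destruct (Rlt_dec a b)
 end.

Lemma ele_refl x : ele x x.
Proof. destruct x; simpl; auto; lra. Qed.
Lemma ele_trans x y z : ele x y -> ele y z -> ele x z.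
Proof. destruct x, y, z; simpl; auto; try lra; tauto. Qed.
Lemma ele_total x y : ele x y \/ ele y x.
Proof. destruct x, y; simpl; auto; lra. Qed.
Lemma nele_ele x y : ~ ele x y -> ele y x.
Proof. destruct x, y; simpl; auto; try lra; tauto. Qed.
Lemma emul_Inf r : 0 < r -> emul r Inf = Inf.
Proof. intros; simpl; dec; auto; lra. Qed.
Lemma emul_0 x : emul 0 x = Fin 0.
Proof. destruct x; simpl; dec; try lra; try reflexivity; f_equal; ring. Qed.
Lemma emul_1 x : emul 1 x = x.
Proof. destruct x; simpl; dec; try lra; try reflexivity; f_equal; ring. Qed.
Lemma emul_mono r u w : 0 <= r -> ele u w -> ele (emul r u) (emul r w).
Proof. intros Hr; destruct u, w; simpl; dec; simpl; try tauto; try nra.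
  all: try (intros; replace r with 0 by lra; lra). Qed.
Lemma emul_addl r s w : 0 <= r -> 0 <= s -> emul (r+s) w = eadd (emul r w) (emul s w).
Proof. intros; destruct w; simpl; dec; simpl; try (f_equal; ring); try lra; auto.
  all: try (f_equal; lra). Qed.
Lemma emul_mul r s w : 0 <= r -> 0 <= s -> emul (r*s) w = emul r (emul s w).
Proof. intros; destruct w; simpl; dec; simpl; try (f_equal; ring); try nra; auto;
  dec; try nra; auto; try (f_equal; ring).
  all: try (assert (r*s>0) by nra; lra).
Qed.
Lemma emul_eadd r u v : 0 <= r -> emul r (eadd u v) = eadd (emul r u) (emul r v).
Proof. intros; destruct u, v; simpl; dec; simpl; auto; try (f_equal; ring).
  all: try (replace r with 0 by lra; f_equal; ring). Qed.
Lemma eadd_comm u v : eadd u v = eadd v u.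
Proof. destruct u, v; simpl; auto; f_equal; ring. Qed.
Lemma eadd_assoc u v w : eadd u (eadd v w) = eadd (eadd u v) w.
Proof. destruct u, v, w; simpl; auto; f_equal; ring. Qed.
Lemma eadd_mono a b c d : ele a b -> ele c d -> ele (eadd a c) (eadd b d).
Proof. destruct a, b, c, d; simpl; auto; lra. Qed.
Lemma ele_emin_l a b : ele (emin a b) a.
Proof. destruct a, b; simpl; auto; try apply Rmin_l; lra. Qed.
Lemma ele_emin_r a b : ele (emin a b) b.
Proof. destruct a, b; simpl; auto; try apply Rmin_r; lra. Qed.
Lemma emin_ele a b v : ele (emin a b) v -> ele a v \/ ele b v.
Proof. destruct a, b, v; simpl; auto.
  unfold Rmin; destruct (Rle_dec r r0); auto. Qed.
Lemma emin_n_ele f n v : ele (emin_n f n) v -> v = Inf \/ exists i, (i < n)%nat /\ ele (f i) v.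
Proof. induction n; simpl; intros H.
  - destruct v; simpl in H; tauto.
  - apply emin_ele in H; destruct H as [H|H].
    + destruct (IHn H) as [?|[i [? ?]]]; auto. right; exists i; split; auto.
    + right; exists n; auto.
Qed.
Lemma ele_emin_n f n v i : (i < n)%nat -> ele (f i) v -> ele (emin_n f n) v.
Proof. induction n; intros Hi H; [inversion Hi|]. simpl.
  destruct (Nat.eq_dec i n) as [->|Hn].
  - eapply ele_trans; [apply ele_emin_r|auto].
  - eapply ele_trans; [apply ele_emin_l|]. apply IHn; auto. lia. Qed.

Lemma esum_ext f g n : (forall i, (i < n)%nat -> f i = g i) -> esum_n f n = esum_n g n.
Proof. induction n; simpl; intros H; auto. rewrite IHn, H; auto. Qed.
Lemma rsum_ext f g n : (forall i, (i < n)%nat -> f i = g i) -> rsum_n f n = rsum_n g n.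
Proof. induction n; simpl; intros H; auto. rewrite IHn, H; auto. Qed.

Lemma min_le_conv (a : nat -> R) (v : nat -> ereal) n :
  (forall i, (i < n)%nat -> 0 <= a i) ->
  ele (emul (rsum_n a n) (emin_n v n)) (esum_n (fun i => emul (a i) (v i)) n).
Proof. induction n; simpl; intros H.
  - dec; simpl; lra.
  - assert (Hs : 0 <= rsum_n a n).
    { clear IHn. induction n; simpl; [lra|]. assert (0 <= a n) by (apply H; lia).
      assert (0 <= rsum_n a n) by (apply IHn; intros; apply H; lia). lra. }
    rewrite emul_addl; [|exact Hs|apply H; lia].
    apply eadd_mono.
    + eapply ele_trans; [apply emul_mono; auto; apply ele_emin_l|]. apply IHn; intros; apply H; lia.
    + apply emul_mono; [apply H; lia|apply ele_emin_r].
Qed.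

Lemma nonneg_emul r u : 0 <= r -> ele (Fin 0) u -> ele (Fin 0) (emul r u).
Proof. intros; destruct u; simpl in *; dec; simpl; auto; nra. Qed.
Lemma nonneg_eadd u v : ele (Fin 0) u -> ele (Fin 0) v -> ele (Fin 0) (eadd u v).
Proof. destruct u, v; simpl; auto; lra. Qed.
Lemma eadd_swap a b c d : eadd (eadd a b) (eadd c d) = eadd (eadd a c) (eadd b d).
Proof. destruct a, b, c, d; simpl; auto; f_equal; ring. Qed.
Lemma eadd_Inf_r u : eadd u Inf = Inf.
Proof. destruct u; auto. Qed.
Lemma emin_Inf_r u : emin u Inf = u.
Proof. destruct u; auto. Qed.

Lemma lin_comb (D : cone) (p1 p2 : D -> ereal) l : 0 <= l <= 1 ->
  linear_functional p1 -> linear_functional p2 ->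
  linear_functional (fun x => eadd (emul l (p1 x)) (emul (1-l) (p2 x))).
Proof. intros Hl [N1 [H1 A1]] [N2 [H2 A2]]. split; [|split].
  - intro x. apply nonneg_eadd; apply nonneg_emul; auto; lra.
  - intros a r Hr. rewrite H1, H2, emul_eadd by auto.
    rewrite <- !emul_mul by lra. rewrite (Rmult_comm l), (Rmult_comm (1-l)). reflexivity.
  - intros a b. rewrite A1, A2, !emul_eadd by lra. apply eadd_swap.
Qed.

Lemma nele_add a b c d e : ~ ele a c -> ~ ele b d -> ele e (eadd c d) -> ~ ele (eadd a b) e.
Proof. destruct a, b, c, d, e; simpl; auto; lra. Qed.
Lemma nele_mul r a c : 0 < r -> ~ ele a c -> ~ ele (emul r a) (emul r c).
Proof. intros Hr; destruct a, c; simpl; dec; simpl; auto; try lra; nra. Qed.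

Definition fin (x : ereal) := match x with Fin r => r | Inf => 0 end.

Lemma caseA (D : cone) (phi : D -> ereal) (E : D -> Prop) (p1 p2 : D -> ereal) :
  sublinear_functional phi -> linear_functional p1 -> linear_functional p2 ->
  (forall x y, E x -> E y -> E (cadd D x y)) ->
  (forall r x, 0 < r -> E x -> E (csmul D r x)) ->
  (forall x, E x -> ele (emin (p1 x) (p2 x)) (phi x)) ->
  (exists x0, E x0 /\ phi x0 <> Inf /\ p1 x0 = Inf) ->
  forall x, E x -> ele (p2 x) (phi x).
Proof.
  intros [Np [Hp Sp]] [N1 [H1 A1]] [N2 [H2 A2]] Eadd Emul Hmin [x0 [E0 [F0 I0]]] x Ex.
  destruct (phi x0) as [f0|] eqn:F0'; [|congruence].
  assert (H0 := Hmin x0 E0). rewrite I0, F0' in H0. simpl in H0.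
  destruct (p2 x0) as [v0|] eqn:P20; [|simpl in H0; contradiction]. simpl in H0.
  destruct (phi x) as [r|] eqn:Fx; [|destruct (p2 x); exact I].
  assert (key : forall t, 0 < t -> exists v, p2 x = Fin v /\ v + t*v0 <= r + t*f0).
  { intros t Ht.
    assert (Ez : E (cadd D x (csmul D t x0))) by auto.
    assert (Hz := Hmin _ Ez).
    rewrite A1, H1, I0, emul_Inf, eadd_Inf_r in Hz by lra. simpl in Hz.
    assert (Sz := Sp x (csmul D t x0)). rewrite Hp, Fx, F0' in Sz by lra.
    rewrite A2, H2, P20 in Hz by lra.
    pose proof (ele_trans _ _ _ Hz Sz) as K. destruct (p2 x) as [v|]; simpl in K; [|contradiction].
    exists v; split; auto. }
  destruct (key 1 ltac:(lra)) as [v [Hv _]]. rewrite Hv; simpl.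
  apply Rnot_lt_le; intro Hc.
  set (t := (v - r) / (2 * (f0 - v0 + 1))).
  assert (Ht : t * (f0 - v0 + 1) = (v - r) / 2) by (unfold t; field; lra).
  assert (Htp : 0 < t) by (unfold t; apply Rdiv_lt_0_compat; lra).
  destruct (key t Htp) as [v' [Hv' K]]. rewrite Hv in Hv'. injection Hv' as <-.
  lra.
Qed.

Lemma caseC (D : cone) (phi : D -> ereal) (E : D -> Prop) (p1 p2 : D -> ereal) :
  sublinear_functional phi -> linear_functional p1 -> linear_functional p2 ->
  (forall x y, E x -> E y -> E (cadd D x y)) ->
  (forall r x, 0 < r -> E x -> E (csmul D r x)) ->
  (forall x, E x -> ele (emin (p1 x) (p2 x)) (phi x)) ->
  (forall x, E x -> phi x <> Inf -> p1 x <> Inf /\ p2 x <> Inf) ->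
  exists l, 0 <= l <= 1 /\
    forall x, E x -> ele (eadd (emul l (p1 x)) (emul (1-l) (p2 x))) (phi x).
Proof.
  intros [Np [Hp Sp]] [N1 [H1 A1]] [N2 [H2 A2]] Eadd Emul Hmin HC.
  set (P := fun x => E x /\ phi x <> Inf).
  set (f := fun x => fin (phi x)). set (u := fun x => fin (p1 x)). set (w := fun x => fin (p2 x)).
  assert (fins : forall x, P x -> phi x = Fin (f x) /\ p1 x = Fin (u x) /\ p2 x = Fin (w x)).
  { intros x [Ex Fx]. destruct (HC x Ex Fx) as [G1 G2]. unfold f, u, w.
    destruct (phi x), (p1 x), (p2 x); simpl; tauto. }
  assert (mins : forall x, P x -> u x <= f x \/ w x <= f x).
  { intros x Px. destruct (fins x Px) as [a [b c]]. assert (K := Hmin x (proj1 Px)).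
    rewrite a, b, c in K. apply emin_ele in K. simpl in K. exact K. }
  assert (comb : forall al be x y, 0 < al -> 0 < be -> P x -> P y ->
     let z := cadd D (csmul D al x) (csmul D be y) in
     P z /\ u z = al * u x + be * u y /\ w z = al * w x + be * w y /\
     f z <= al * f x + be * f y).
  { intros al be x y Ha Hb Px Py z.
    destruct (fins x Px) as [a1 [b1 c1]]. destruct (fins y Py) as [a2 [b2 c2]].
    assert (Ez : E z) by (apply Eadd; apply Emul; auto; apply Px + apply Py).
    assert (Sz := Sp (csmul D al x) (csmul D be y)).
    rewrite !Hp, a1, a2 in Sz by lra. simpl in Sz.
    assert (Pz : P z). { split; auto. intro Hi. fold z in Sz. rewrite Hi in Sz. exact Sz. }
    destruct (fins z Pz) as [a3 [b3 c3]].
    unfold z in b3, c3. rewrite A1, !H1, b1, b2 in b3 by lra.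
    rewrite A2, !H2, c1, c2 in c3 by lra. simpl in b3, c3.
    injection b3 as b3. injection c3 as c3.
    fold z in Sz. rewrite a3 in Sz. simpl in Sz. fold z in b3, c3. refine (conj Pz (conj _ (conj _ _))); lra. }
  assert (cross : forall x y, P x -> P y -> u x > f x -> w y > f y ->
     (u x - f x) * (w y - f y) <= (f x - w x) * (f y - u y)).
  { intros x y Px Py Hx Hy.
    assert (q0 : w x <= f x) by (destruct (mins x Px); lra).
    assert (r0 : u y <= f y) by (destruct (mins y Py); lra).
    apply Rnot_lt_le; intro Hc.
    set (p := u x - f x) in *. set (q := f x - w x) in *. set (r := f y - u y) in *.
    set (s := w y - f y) in *.
    destruct (comb (r + s) (p + q) x y ltac:(unfold r, s; lra) ltac:(unfold p, q; lra) Px Py)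
      as [Pz [Uz [Wz Fz]]].
    destruct (mins _ Pz) as [K|K].
    - assert (E1 : (r + s) * u x + (p + q) * u y - ((r + s) * f x + (p + q) * f y)
                  = s * p - q * r) by (unfold p, q, r, s; ring). nra.
    - assert (E1 : (r + s) * w x + (p + q) * w y - ((r + s) * f x + (p + q) * f y)
                  = p * s - r * q) by (unfold p, q, r, s; ring). nra. }
  set (S := fun t => t = 0 \/ exists y, P y /\ w y > f y /\
                 t = (w y - f y) / ((f y - u y) + (w y - f y))).
  assert (Sle : forall x, P x -> u x > f x -> forall t, S t -> t <= (f x - w x) / ((u x - f x) + (f x - w x))).
  { intros x Px Hx t [->|[y [Py [Hy ->]]]].
    - assert (w x <= f x) by (destruct (mins x Px); lra).
      unfold Rdiv; apply Rmult_le_pos; [lra|]; left; apply Rinv_0_lt_compat; lra.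
    - assert (w x <= f x) by (destruct (mins x Px); lra).
      assert (u y <= f y) by (destruct (mins y Py); lra).
      assert (C := cross x y Px Py Hx Hy).
      set (t1 := (w y - f y) / ((f y - u y) + (w y - f y))).
      set (t2 := (f x - w x) / ((u x - f x) + (f x - w x))).
      assert (T1 : t1 * ((f y - u y) + (w y - f y)) = w y - f y) by (unfold t1; field; lra).
      assert (T2 : t2 * ((u x - f x) + (f x - w x)) = f x - w x) by (unfold t2; field; lra).
      apply Rnot_lt_le; intro Hc.
      assert (0 < (t1 - t2) * (((f y - u y) + (w y - f y)) * ((u x - f x) + (f x - w x)))).
      { apply Rmult_lt_0_compat; [lra|]. apply Rmult_lt_0_compat; lra. }
      nra. }
  assert (Sb : bound S).
  { exists 1. intros t [->|[y [Py [Hy ->]]]]; [lra|].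
    assert (u y <= f y) by (destruct (mins y Py); lra).
    apply Rmult_le_reg_r with ((f y - u y) + (w y - f y)); [lra|].
    unfold Rdiv; rewrite Rmult_assoc, Rinv_l by lra. lra. }
  destruct (completeness S Sb (ex_intro _ 0 (or_introl eq_refl))) as [l [Lub Lle]].
  assert (l0 : 0 <= l) by (apply Lub; left; auto).
  assert (l1 : l <= 1).
  { apply Lle. intros t [->|[y [Py [Hy ->]]]]; [lra|].
    assert (u y <= f y) by (destruct (mins y Py); lra).
    apply Rmult_le_reg_r with ((f y - u y) + (w y - f y)); [lra|].
    unfold Rdiv; rewrite Rmult_assoc, Rinv_l by lra. lra. }
  exists l; split; [lra|].
  intros x Ex. destruct (phi x) eqn:Fx; [|destruct (eadd _ _); exact I].
  assert (Px : P x) by (split; auto; congruence).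
  destruct (fins x Px) as [a [b c]]. rewrite b, c. rewrite a in Fx. injection Fx as <-.
  simpl.
  destruct (Rlt_dec (f x) (u x)) as [Hu|Hu].
  - assert (w x <= f x) by (destruct (mins x Px); lra).
    assert (L := Lle _ (Sle x Px Hu)).
    set (t2 := (f x - w x) / ((u x - f x) + (f x - w x))) in L.
    assert (T2 : t2 * ((u x - f x) + (f x - w x)) = f x - w x) by (unfold t2; field; lra).
    assert (l * ((u x - f x) + (f x - w x)) <= t2 * ((u x - f x) + (f x - w x)))
      by (apply Rmult_le_compat_r; lra).
    nra.
  - destruct (Rlt_dec (f x) (w x)) as [Hw|Hw].
    + assert (u x <= f x) by lra.
      assert (L : (w x - f x) / ((f x - u x) + (w x - f x)) <= l) by (apply Lub; right; exists x; auto).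
      set (t1 := (w x - f x) / ((f x - u x) + (w x - f x))) in L.
      assert (T1 : t1 * ((f x - u x) + (w x - f x)) = w x - f x) by (unfold t1; field; lra).
      assert (t1 * ((f x - u x) + (w x - f x)) <= l * ((f x - u x) + (w x - f x)))
        by (apply Rmult_le_compat_r; lra).
      nra.
    + nra.
Qed.

Lemma eadd_0_l v : eadd (Fin 0) v = v.
Proof. destruct v; simpl; auto; f_equal; ring. Qed.
Lemma eadd_0_r v : eadd v (Fin 0) = v.
Proof. destruct v; simpl; auto; f_equal; ring. Qed.
Lemma emin_comm a b : emin a b = emin b a.
Proof. destruct a, b; simpl; auto; f_equal; apply Rmin_comm. Qed.

Lemma two (D : cone) (phi : D -> ereal) (E : D -> Prop) (p1 p2 : D -> ereal) :
  sublinear_functional phi -> linear_functional p1 -> linear_functional p2 ->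
  (forall x y, E x -> E y -> E (cadd D x y)) ->
  (forall r x, 0 < r -> E x -> E (csmul D r x)) ->
  (forall x, E x -> ele (emin (p1 x) (p2 x)) (phi x)) ->
  exists l, 0 <= l <= 1 /\
    forall x, E x -> ele (eadd (emul l (p1 x)) (emul (1-l) (p2 x))) (phi x).
Proof.
  intros Sp L1 L2 Ea Em Hm.
  destruct (classic (exists x0, E x0 /\ phi x0 <> Inf /\ p1 x0 = Inf)) as [HA|nA].
  { exists 0; split; [lra|]. intros x Ex.
    rewrite emul_0, Rminus_0_r, emul_1, eadd_0_l. exact (caseA D phi E p1 p2 Sp L1 L2 Ea Em Hm HA x Ex). }
  destruct (classic (exists x0, E x0 /\ phi x0 <> Inf /\ p2 x0 = Inf)) as [HB|nB].
  { exists 1; split; [lra|]. intros x Ex.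
    rewrite Rminus_diag, emul_0, emul_1, eadd_0_r. refine (caseA D phi E p2 p1 Sp L2 L1 Ea Em _ HB x Ex).
    intros; rewrite emin_comm; auto. }
  apply caseC; auto.
  intros x Ex Fx; split; intro Hi; [apply nA|apply nB]; exists x; auto.
Qed.

Lemma main_ind (D : cone) (phi : D -> ereal) : sublinear_functional phi ->
  forall n (psi : nat -> D -> ereal),
  (forall i, (i < S n)%nat -> linear_functional (psi i)) ->
  (forall x, ele (emin_n (fun i => psi i x) (S n)) (phi x)) ->
  exists a : nat -> R,
    (forall i, (i < S n)%nat -> 0 <= a i) /\ rsum_n a (S n) = 1 /\
    forall x, ele (esum_n (fun i => emul (a i) (psi i x)) (S n)) (phi x).
Proof.
  intros Sp. pose proof Sp as [Np [Hp Ssp]].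
  induction n; intros psi Lin Hmin.
  - exists (fun _ => 1). split; [intros; lra|]. split; [simpl; lra|].
    intros x. change (ele (eadd (Fin 0) (emul 1 (psi 0%nat x))) (phi x)).
    rewrite emul_1, eadd_0_l. exact (Hmin x).
  - set (E := fun x => forall i, (i < n)%nat -> ~ ele (psi i x) (phi x)).
    assert (Ea : forall x y, E x -> E y -> E (cadd D x y)).
    { intros x y Ex Ey i Hi. destruct (Lin i ltac:(lia)) as [_ [_ A]]. rewrite A.
      eapply nele_add; [apply Ex|apply Ey|apply Ssp]; auto. }
    assert (Em : forall r x, 0 < r -> E x -> E (csmul D r x)).
    { intros r x Hr Ex i Hi. destruct (Lin i ltac:(lia)) as [_ [H _]].
      rewrite H, Hp by lra. apply nele_mul; auto. }
    assert (Hm2 : forall x, E x -> ele (emin (psi n x) (psi (S n) x)) (phi x)).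
    { intros x Ex. destruct (emin_n_ele _ _ _ (Hmin x)) as [Hi|[i [Hi K]]].
      - rewrite Hi. destruct (emin _ _); exact I.
      - destruct (Nat.lt_ge_cases i n) as [Hl|Hl]; [exfalso; apply (Ex i Hl K)|].
        destruct (Nat.eq_dec i n) as [->|Hne].
        + eapply ele_trans; [apply ele_emin_l|exact K].
        + assert (i = S n) as -> by lia. eapply ele_trans; [apply ele_emin_r|exact K]. }
    destruct (two D phi E (psi n) (psi (S n)) Sp (Lin n ltac:(lia)) (Lin (S n) ltac:(lia))
               Ea Em Hm2) as [l [Hl Hcomb]].
    set (psi' := fun i x => if Nat.eqb i n
                 then eadd (emul l (psi n x)) (emul (1-l) (psi (S n) x)) else psi i x).
    destruct (IHn psi') as [b [Hb0 [Hb1 Hb]]].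
    { intros i Hi. unfold psi'. destruct (Nat.eqb_spec i n).
      - apply lin_comb; auto; apply Lin; lia.
      - apply Lin; lia. }
    { intros x. destruct (classic (E x)) as [Ex|nEx].
      - apply (ele_emin_n _ _ _ n); [lia|]. unfold psi'; rewrite Nat.eqb_refl. auto.
      - apply not_all_ex_not in nEx. destruct nEx as [i Hi].
        apply imply_to_and in Hi. destruct Hi as [Hi K]. apply NNPP in K.
        apply (ele_emin_n _ _ _ i); [lia|]. unfold psi'.
        destruct (Nat.eqb_spec i n); [lia|auto]. }
    exists (fun i => if Nat.eqb i n then b n * l else if Nat.eqb i (S n) then b n * (1-l) else b i).
    assert (bn : 0 <= b n) by (apply Hb0; lia).
    split; [|split].
    + intros i Hi. destruct (Nat.eqb_spec i n); [nra|].
      destruct (Nat.eqb_spec i (S n)); [nra|]. apply Hb0; lia.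
    + transitivity (rsum_n b (S n)); [|exact Hb1]. cbn [rsum_n]. rewrite Nat.eqb_refl.
      replace (Nat.eqb (S n) n) with false by (symmetry; apply Nat.eqb_neq; lia).
      rewrite Nat.eqb_refl.
      rewrite (rsum_ext _ b n); [ring|].
      intros i Hi. replace (Nat.eqb i n) with false by (symmetry; apply Nat.eqb_neq; lia).
      replace (Nat.eqb i (S n)) with false by (symmetry; apply Nat.eqb_neq; lia). auto.
    + intros x. pose proof (Hb x) as K. cbn [esum_n] in K |- *.
      rewrite (esum_ext _ (fun i => emul (b i) (psi' i x)) n).
      2: { intros i Hi. unfold psi'.
           replace (Nat.eqb i n) with false by (symmetry; apply Nat.eqb_neq; lia).
           replace (Nat.eqb i (S n)) with false by (symmetry; apply Nat.eqb_neq; lia).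
           reflexivity. }
      rewrite Nat.eqb_refl.
      replace (Nat.eqb (S n) n) with false by (symmetry; apply Nat.eqb_neq; lia).
      rewrite Nat.eqb_refl.
      unfold psi' in K. rewrite Nat.eqb_refl in K.
      rewrite !emul_mul by lra. rewrite <- eadd_assoc, <- emul_eadd by lra. exact K.
Qed.

Theorem proposition2p8 (D : cone) (phi : D -> ereal) (n : nat)
  (psi : nat -> D -> ereal) :
  (1 <= n)%nat ->
  sublinear_functional phi ->
  (forall i, (i < n)%nat -> linear_functional (psi i)) ->
  (forall x, ele (emin_n (fun i => psi i x) n) (phi x)) ->
  exists a : nat -> R,
    (forall i, (i < n)%nat -> 0 <= a i) /\
    rsum_n a n = 1 /\
    forall x,
      ele (emin_n (fun i => psi i x) n) (esum_n (fun i => emul (a i) (psi i x)) n) /\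
      ele (esum_n (fun i => emul (a i) (psi i x)) n) (phi x).
Proof.
  intros Hn Sp Lin Hmin. destruct n as [|m]; [lia|].
  destruct (main_ind D phi Sp m psi Lin Hmin) as [a [Ha0 [Ha1 Ha]]].
  exists a. split; [auto|]. split; [auto|]. intros x. split; [|apply Ha].
  pose proof (min_le_conv a (fun i => psi i x) (S m) Ha0) as K.
  rewrite Ha1, emul_1 in K. exact K.
Qed.
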